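(* Consider the network formation game with validators $V$, services $S$ (nonempty), stakes $\sigma$, reward pools $R$ and target restaking degree $d^*>0$. Assume that for every $s\in S$, $R(s)>0$ and $d^*\cdot\frac{R(s)}{\sum_{s'\in S}R(s')}\le1$. Then the allocation profile $$w^*(v,s)=d^*\cdot\frac{R(s)}{\sum_{s'\in S}R(s')}\cdot\sigma(v)\qquad(v\in V,\ s\in S)$$ is a Nash equilibrium of the game, and under it every validator has restaking degree exactly $d^*$.
   Context: Network formation game: $V$ is a finite nonempty set of validators with stakes $\sigma:V\to\mathbb{R}_{>0}$, $S$ is a finite set of services with reward pools $R:S\to\mathbb{R}_{>0}$, and $d^*>0$ is a target restaking degree. Each validator $v$ chooses allocations $w(v,s)\in[0,\sigma(v)]$ for all $s\in S$; the profile is $w:V\times S\to\mathbb{R}_{\ge0}$. The restaking degree of $v$ is $\deg(v)=\sum_{s\in S}w(v,s)/\sigma(v)$. The utility of $v$ is $$u_v(w)=\begin{cases}\sum_{s\in S}\frac{w(v,s)}{\sum_{v'\in V}w(v',s)}R(s)&\text{if }\deg(v)\le d^*,\\0&\text{otherwise,}\end{cases}$$ where a term with $w(v,s)=0$ is taken to be $0$. A Nash equilibrium is a profile in which no single validator can strictly increase its utility by unilaterally changing its own allocations. *)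

(* Defs.v *)
From mathcomp Require Import all_boot all_order all_algebra.
Set Implicit Arguments. Unset Strict Implicit. Unset Printing Implicit Defensive.
Import Order.TTheory GRing.Theory Num.Theory.
Local Open Scope ring_scope.

Section Game.
Variables (R : realFieldType) (V S : finType).
Variables (sigma : V -> R) (Rw : S -> R) (dstar : R).

Notation profile := (V -> S -> R).

Definition feasible_row (v : V) (x : S -> R) : Prop :=
  forall s, 0 <= x s <= sigma v.

Definition feasible (w : profile) : Prop := forall v, feasible_row v (w v).

Definition restaking_degree (w : profile) (v : V) : R :=
  (\sum_(s : S) w v s) / sigma v.

Definition utility (w : profile) (v : V) : R :=
  if restaking_degree w v <= dstar then
    \sum_(s : S) (if w v s == 0 then 0
                  else w v s / (\sum_(v' : V) w v' s) * Rw s)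
  else 0.

Definition deviate (w : profile) (v : V) (x : S -> R) : profile :=
  fun v' s => if v' == v then x s else w v' s.

Definition nash_equilibrium (w : profile) : Prop :=
  feasible w /\
  forall v (x : S -> R), feasible_row v x ->
    ~ (utility w v < utility (deviate w v x) v).

Definition proportional_profile : profile :=
  fun v s => dstar * (Rw s / \sum_(s' : S) Rw s') * sigma v.

End Game.

(* Main.v *)
Require Import Defs.
From mathcomp Require Import all_boot all_order all_algebra.
From mathcomp Require Import ring lra.
Import Order.TTheory GRing.Theory Num.Theory.
Local Open Scope ring_scope.

Lemma tangent (R : realFieldType) (r A w x : R) : 0 < r -> 0 <= A -> 0 < w -> 0 <= x ->
  0 < x + A ->
  r * x / (x + A) <= r * w / (w + A) + r * A / (w + A) ^+ 2 * (x - w).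
Proof.
move=> hr hA hw hx hxA.
have hwA : 0 < w + A by lra.
rewrite -subr_ge0.
have -> : r * w / (w + A) + r * A / (w + A) ^+ 2 * (x - w) - r * x / (x + A)
   = r * A * (x - w) ^+ 2 / ((x + A) * (w + A) ^+ 2).
  by field; rewrite ?lt0r_neq0.
apply: divr_ge0.
  apply: mulr_ge0; [apply: mulr_ge0; [exact: ltW|done]|exact: sqr_ge0].
apply: mulr_ge0; [exact: ltW|exact: sqr_ge0].
Qed.

Lemma sum_ge_term (R : realFieldType) (T : finType) (f : T -> R) (i : T) :
  (forall j, 0 <= f j) -> f i <= \sum_j f j.
Proof.
move=> h; rewrite (bigD1 i) //= lerDl; exact: sumr_ge0.
Qed.

Theorem mainTheorem19 (R : realFieldType) (V S : finType)
  (sigma : V -> R) (Rw : S -> R) (dstar : R)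
  (hV : (0 < #|V|)%N) (hS : (0 < #|S|)%N)
  (hsigma : forall v, 0 < sigma v)
  (hR : forall s, 0 < Rw s)
  (hd : 0 < dstar)
  (hcap : forall s, dstar * (Rw s / \sum_(s' : S) Rw s') <= 1) :
  nash_equilibrium sigma Rw dstar (proportional_profile sigma Rw dstar) /\
  forall v, restaking_degree sigma (proportional_profile sigma Rw dstar) v = dstar.
Proof.
set T := \sum_(s' : S) Rw s'.
set Sg := \sum_(v' : V) sigma v'.
have [s0 _] : exists s0 : S, true.
  by case/card_gt0P: hS => s _; exists s.
have hT : 0 < T.
  apply: (lt_le_trans (hR s0)); apply: sum_ge_term => j; exact: ltW.
have hSv : forall v, sigma v <= Sg.
  move=> v; apply: sum_ge_term => j; exact: ltW.
set P := proportional_profile sigma Rw dstar.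
have hP : forall v s, P v s = dstar * (Rw s / T) * sigma v by [].
have hPpos : forall v s, 0 < P v s.
  move=> v s; by rewrite hP !mulr_gt0 // invr_gt0.
have hdeg : forall v, restaking_degree sigma P v = dstar.
  move=> v; rewrite /restaking_degree.
  under eq_bigr => s _ do rewrite hP.
  rewrite -mulr_suml -mulr_sumr -mulr_suml -/T.
  by field; rewrite ?lt0r_neq0.
have hcol : forall s, \sum_(v' : V) P v' s = dstar * (Rw s / T) * Sg.
  by move=> s; under eq_bigr => v' _ do rewrite hP; rewrite -mulr_sumr.
have hU : forall v, utility sigma Rw dstar P v = \sum_s (sigma v * Rw s / Sg).
  move=> v; rewrite /utility hdeg lexx; apply: eq_bigr => s _.
  rewrite (negbTE (lt0r_neq0 (hPpos v s))) hcol hP.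
  have hSg : 0 < Sg by apply: lt_le_trans (hSv v).
  by field; rewrite ?lt0r_neq0.
split=> //; split.
  move=> v s; apply/andP; split; first exact: ltW (hPpos v s).
  by rewrite hP ler_piMl ?hcap // ltW.
move=> v x hx.
have hSg : 0 < Sg by apply: lt_le_trans (hSv v).
apply/negP; rewrite -leNgt.
have hU0 : 0 <= utility sigma Rw dstar P v.
  rewrite hU; apply: sumr_ge0 => s _; rewrite divr_ge0 ?mulr_ge0 // ltW //.
rewrite /utility [X in if X then _ else _]/=.
case: ifP => hdx; last by rewrite -/(utility _ _ _ _ _) .
have hdv : forall s, deviate P v x v s = x s.
  by move=> s; rewrite /deviate eqxx.
have hrest : \sum_(v' | v' != v) sigma v' = Sg - sigma v.
  by rewrite /Sg [in RHS](bigD1 v) //= addrAC subrr add0r.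
have hdev : forall s, \sum_v' deviate P v x v' s
     = x s + dstar * (Rw s / T) * (Sg - sigma v).
  move=> s; rewrite (bigD1 v) //= hdv; congr (_ + _).
  rewrite -hrest mulr_sumr; apply: eq_bigr => v' hv'.
  by rewrite /deviate (negbTE hv') hP.
have hsumP : \sum_s P v s = dstar * sigma v.
  have := hdeg v; rewrite /restaking_degree => <-.
  by rewrite divfK // lt0r_neq0.
have hsumx : \sum_s x s <= dstar * sigma v.
  move: hdx; rewrite /restaking_degree.
  under eq_bigr => s _ do rewrite hdv.
  by rewrite ler_pdivrMr // mulrC.
set lam := T * (Sg - sigma v) / (dstar * Sg ^+ 2).
have hlam : 0 <= lam.
  rewrite /lam divr_ge0 ?mulr_ge0 ?sqr_ge0 ?subr_ge0 ?hSv // ltW //.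
have hterm : forall s,
   (if deviate P v x v s == 0 then 0
    else deviate P v x v s / (\sum_v' deviate P v x v' s) * Rw s)
   <= sigma v * Rw s / Sg + lam * (x s - P v s).
  move=> s; rewrite hdev hdv hP.
  have hk : 0 < dstar * (Rw s / T) by rewrite mulr_gt0 // divr_gt0.
  have hA : 0 <= dstar * (Rw s / T) * (Sg - sigma v).
    by rewrite mulr_ge0 ?subr_ge0 ?hSv // ltW.
  have [hx0 hxs] := andP (hx s).
  case: eqP => [->|hxn].
    rewrite -subr_ge0.
    have -> : sigma v * Rw s / Sg + lam * (0 - dstar * (Rw s / T) * sigma v) - 0
        = Rw s * sigma v ^+ 2 / Sg ^+ 2.
      rewrite /lam; by field; rewrite ?lt0r_neq0.
    by rewrite divr_ge0 ?mulr_ge0 ?sqr_ge0 // ltW.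
  have hxp : 0 < x s by rewrite lt_neqAle eq_sym hx0 andbT; apply/eqP.
  have hxA : 0 < x s + dstar * (Rw s / T) * (Sg - sigma v).
    by apply: (lt_le_trans hxp); rewrite lerDl.
  have hw : 0 < dstar * (Rw s / T) * sigma v by rewrite mulr_gt0.
  have := @tangent R _ _ _ _ (hR s) hA hw hx0 hxA.
  have -> : Rw s * (dstar * (Rw s / T) * sigma v) /
      (dstar * (Rw s / T) * sigma v + dstar * (Rw s / T) * (Sg - sigma v))
      = sigma v * Rw s / Sg.
    field.
    have -> : dstar * Rw s * sigma v + dstar * Rw s * (Sg - sigma v) = dstar * Rw s * Sg by ring.
    by rewrite !mulf_neq0 ?lt0r_neq0.
  have -> : Rw s * (dstar * (Rw s / T) * (Sg - sigma v)) /
      (dstar * (Rw s / T) * sigma v + dstar * (Rw s / T) * (Sg - sigma v)) ^+ 2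
      = lam.
    rewrite /lam; field.
    have -> : dstar * Rw s * sigma v + dstar * Rw s * (Sg - sigma v) = dstar * Rw s * Sg by ring.
    by rewrite !mulf_neq0 ?lt0r_neq0.
  by rewrite [_ / _ * Rw s]mulrAC [x s * Rw s]mulrC.
apply: (le_trans (ler_sum _ (fun s _ => hterm s))).
have <- : utility sigma Rw dstar P v = (if restaking_degree sigma P v <= dstar
   then \sum_s (if P v s == 0 then 0 else P v s / (\sum_v' P v' s) * Rw s)
   else 0) by [].
rewrite big_split /= -mulr_sumr sumrB hsumP hU gerDl.
by rewrite mulr_ge0_le0 // subr_le0.
Qed.
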